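(* In a positive, anchored hidden Markov model with any (measurable) policy $g$, there exists a constant $0<\lambda<1$ such that for all $Z\in\mathcal P(\mathcal P(S))$ and all $t\ge0$, $F^t(Z)(R^c)\le\lambda^t$.
   Context: Model: $(X_t)$ is a time-homogeneous Markov chain on $S=\{1,\dots,n\}$ with transition matrix $T$; $O$ is a finite index set of observation processes $Y^{(i)}_t$ with values in $V=\{1,\dots,m\}$ and observation matrices $M^{(i)}$, $M^{(i)}_{jk}=\mathbb P(Y^{(i)}_t=k\mid X_t=j)$. $\mathcal P(S)$ is the probability simplex in $\mathbb R^n$, $\delta(x)$ the point mass at $x\in S$, $\mathcal P(\mathcal P(S))$ the Radon probability measures on $\mathcal P(S)$. A policy is a function $g:\mathcal P(S)\to O$, $A_i=g^{-1}\{i\}$ (the observation process used at time $t+1$ is $g$ of the current information state, i.e. the posterior distribution of $X_t$). For $i\in O$, $y\in V$: $\alpha_{i,y}(z)=(zTM^{(i)})_y=\sum_{j,x}z_jT_{j,x}M^{(i)}_{x,y}$, and when $\alpha_{i,y}(z)>0$, $r_{i,y}(z)=\frac{\sum_{x,j}M^{(i)}_{x,y}T_{j,x}z_j\delta(x)}{\sum_{x,j}M^{(i)}_{x,y}T_{j,x}z_j}$. The transition function $F:\mathcal P(\mathcal P(S))\to\mathcal P(\mathcal P(S))$ is $F(\mu)=\sum_{i\in O}\sum_{y\in V}\int_{A_i}\alpha_{i,y}(z)\delta_{r_{i,y}(z)}\,d\mu(z)$ (terms with $\alpha_{i,y}(z)=0$ are zero). Positive: all entries of $T$ are strictly positive.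 Anchored: $(X_t)$ is ergodic and for each $i\in O$ there are $x_i\in S$, $y_i\in V$ with $M^{(i)}_{x_i,y_i}>0$ and $M^{(i)}_{x,y_i}=0$ for $x\ne x_i$. Orbit $R_x$: $\delta(x)$ together with all points $r_{i_k,y_k}\circ\cdots\circ r_{i_1,y_1}(\delta(x))$ ($k\ge1$, arbitrary $i_j\in O$, $y_j\in V$) such that each $\alpha_{i_{j+1},y_{j+1}}$ evaluated at the preceding point is positive. $R=\bigcup_{x\in S}R_x$, and $R^c$ is its complement in $\mathcal P(S)$. *)

(* Defs.v *)
From HB Require Import structures.
From mathcomp Require Import all_boot all_order all_algebra.
From mathcomp Require Import all_classical all_reals all_analysis.
Set Implicit Arguments. Unset Strict Implicit. Unset Printing Implicit Defensive.
Import Order.TTheory GRing.Theory Num.Theory.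
Import numFieldNormedType.Exports.
Local Open Scope classical_set_scope.
Local Open Scope ring_scope.

(* Points of P(S) are row vectors z : 'rV[R]_n (z 0 j = probability of state j). *)
Notation Borel_rV R n :=
  (g_sigma_algebraType (@open 'rV[R]_n)).

Definition simplex (R : realType) (n : nat) : set 'rV[R]_n :=
  [set z | (forall j, 0 <= z 0 j) /\ \sum_j z 0 j = 1].
Arguments simplex : clear implicits.

Definition pt_mass (R : realType) (n : nat) (x : 'I_n) : 'rV[R]_n :=
  delta_mx 0 x.
Arguments pt_mass R {n} x.

Definition stochastic (R : realType) (p q : nat) (A : 'M[R]_(p, q)) : Prop :=
  (forall i j, 0 <= A i j) /\ (forall i, \sum_j A i j = 1).

Definition positive_mx (R : realType) (n : nat) (T : 'M[R]_n) : Prop :=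
  forall i j, 0 < T i j.

(* ergodic finite chain (irreducible and aperiodic) = some power of T has
   all entries strictly positive (regular / primitive transition matrix) *)
Definition ergodic (R : realType) (n : nat) (T : 'M[R]_n) : Prop :=
  exists k : nat, forall i j, 0 < (T ^+ k.+1) i j.

Definition anchored (R : realType) (n m : nat) (O : finType)
  (T : 'M[R]_n) (M : O -> 'M[R]_(n, m)) : Prop :=
  ergodic T /\
  forall i : O, exists xi : 'I_n, exists yi : 'I_m,
    0 < M i xi yi /\ forall x, x != xi -> M i x yi = 0.

Definition alpha (R : realType) (n m : nat) (O : finType)
  (T : 'M[R]_n) (M : O -> 'M[R]_(n, m)) (i : O) (y : 'I_m) (z : 'rV[R]_n) : R :=
  (z *m T *m M i) 0 y.

(* r_{i,y}(z) = sum_x M_{x,y} (zT)_x delta(x) / alpha_{i,y}(z)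
   (only meaningful when alpha_{i,y}(z) > 0) *)
Definition rmap (R : realType) (n m : nat) (O : finType)
  (T : 'M[R]_n) (M : O -> 'M[R]_(n, m)) (i : O) (y : 'I_m) (z : 'rV[R]_n)
  : 'rV[R]_n :=
  \row_x (M i x y * (z *m T) 0 x / alpha T M i y z).

Inductive orbitR (R : realType) (n m : nat) (O : finType)
  (T : 'M[R]_n) (M : O -> 'M[R]_(n, m)) : 'rV[R]_n -> Prop :=
| orbitR_base (x : 'I_n) : orbitR T M (pt_mass R x)
| orbitR_step (i : O) (y : 'I_m) (z : 'rV[R]_n) :
    orbitR T M z -> 0 < alpha T M i y z -> orbitR T M (rmap T M i y z).

Definition Rcomp (R : realType) (n m : nat) (O : finType)
  (T : 'M[R]_n) (M : O -> 'M[R]_(n, m)) : set 'rV[R]_n :=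
  simplex R n `\` orbitR T M.

(* A sequence of probability measures Zs on P(S) (measures on R^n carried by
   the simplex) is the F-orbit of Zs 0 under policy g:
   Zs (t+1) (B) = sum_i sum_y int_{A_i} alpha_{i,y}(z) 1_B(r_{i,y}(z)) dZs t (z). *)
Definition F_trajectory (R : realType) (n m : nat) (O : finType)
  (T : 'M[R]_n) (M : O -> 'M[R]_(n, m)) (g : 'rV[R]_n -> O)
  (Zs : nat -> probability (Borel_rV R n) R) : Prop :=
  Zs 0%N (simplex R n) = 1%E /\
  forall (t : nat) (B : set (Borel_rV R n)), measurable B ->
    Zs t.+1 B =
    (\sum_(i : O) \sum_(y < m)
       \int[Zs t]_(z in simplex R n `&` g @^-1` [set i])
          ((alpha T M i y z)%:E * (\1_B (rmap T M i y z))%:E))%E.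

(* Main.v *)
Require Import Defs.
From HB Require Import structures.
From mathcomp Require Import all_boot all_order all_algebra.
From mathcomp Require Import all_classical all_reals all_analysis.
From mathcomp Require Import measurable_realfun.
Import Order.TTheory GRing.Theory Num.Theory.
Import numFieldNormedType.Exports.
Local Open Scope classical_set_scope.
Local Open Scope ring_scope.
Set Implicit Arguments. Unset Strict Implicit.

Lemma open_meas (R : realType) n (A : set 'rV[R]_n) : open A -> measurable (A : set (Borel_rV R n)).
Proof. move=> oA; exact: sub_sigma_algebra. Qed.
From mathcomp Require Import lra.

Lemma coord_meas (R : realType) n (j : 'I_n) :
  measurable_fun (setT : set (Borel_rV R n)) (fun z : 'rV[R]_n => z 0 j).
Proof.
apply: (@measurability _ _ _ _ _ _ (@RGenInftyO.G R)).
  exact: RGenInftyO.measurableE. 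
move=> _ [_ [x ->] <-].
rewrite setTI; apply: open_meas.
apply: open_comp; last exact: open_lt.
by move=> z _; exact: coord_continuous.
Qed.

Lemma le_int_nm d (T : measurableType d) (R : realType) (mu : {measure set T -> \bar R})
  (D : set T) (f g : T -> \bar R) :
  (forall x, D x -> (0 <= f x)%E) -> (forall x, D x -> (f x <= g x)%E) ->
  (\int[mu]_(x in D) f x <= \int[mu]_(x in D) g x)%E.
Proof.
move=> f0 fg.
have g0 : forall x, D x -> (0 <= g x)%E.
  by move=> x Dx; exact: le_trans (f0 _ Dx) (fg _ Dx).
rewrite (ge0_integralE _ f0) (ge0_integralE _ g0).
apply: le_ereal_sup => _ [h hf <-]; exists h => // x.
apply: le_trans (hf x) _; exact: lee_restrict.
Qed.

Lemma set1_meas (R : realType) n (p : 'rV[R]_n) : measurable ([set p] : set (Borel_rV R n)).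
Proof.
have cl : closed [set p] by apply: accessible_closed_set1; apply: hausdorff_accessible; exact: norm_hausdorff.
rewrite -[X in measurable X]setCK; apply: measurableC; apply: open_meas.
exact: closed_openC.
Qed.

Lemma alpha_meas (R : realType) n m (O : finType) (T : 'M[R]_n) (M : O -> 'M[R]_(n, m)) i y :
  measurable_fun (setT : set (Borel_rV R n)) (alpha T M i y).
Proof.
have -> : alpha T M i y = fun z => \sum_j z 0 j * (T *m M i) j y.
  by apply/funext => z; rewrite /alpha -mulmxA mxE.
apply: measurable_sum => j; apply: measurable_funM => //; first exact: coord_meas.
Qed.

Fixpoint iterR (R : realType) n m (O : finType) (T : 'M[R]_n) (M : O -> 'M[R]_(n, m))
  (x : 'I_n) (s : seq (O * 'I_m)) : 'rV[R]_n :=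
  match s with
  | [::] => pt_mass R x
  | p :: s' => rmap T M p.1 p.2 (iterR T M x s')
  end.


Lemma orbit_iter (R : realType) n m (O : finType) (T : 'M[R]_n) (M : O -> 'M[R]_(n, m)) z :
  orbitR T M z -> exists x s, z = iterR T M x s.
Proof.
elim => [x|i y z' _ [x [s ->]] _]; first by exists x, [::].
by exists x, ((i, y) :: s).
Qed.

Lemma orbit_meas (R : realType) n m (O : finType) (T : 'M[R]_n) (M : O -> 'M[R]_(n, m)) :
  measurable (orbitR T M : set (Borel_rV R n)).
Proof.
pose F (k : nat) : set (Borel_rV R n) :=
  match @unpickle ('I_n * seq (O * 'I_m))%type k with
  | Some p => orbitR T M `&` [set iterR T M p.1 p.2]
  | None => set0 end.
have -> : (orbitR T M : set (Borel_rV R n)) = \bigcup_k F k.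
  apply/seteqP; split => [z Oz|z [k _]].
    have [x [s E]] := orbit_iter Oz.
    exists (pickle (x, s)) => //; rewrite /F pickleK /=; split => //.
  by rewrite /F; case: unpickle => [p|] // [].
apply: bigcupT_measurable => k; rewrite /F; case: unpickle => [p|] //.
have [Op|Op] := pselect (orbitR T M (iterR T M p.1 p.2)).
  rewrite (_ : _ `&` _ = [set iterR T M p.1 p.2]); first exact: set1_meas.
  by apply/seteqP; split => [z []//|z ->].
rewrite (_ : _ `&` _ = set0) //.
by apply/seteqP; split => [z [Oz zE]|z //]; apply: Op; rewrite -zE.
Qed.
Lemma zT_ge0 (R : realType) n (T : 'M[R]_n) (z : 'rV[R]_n) x :
  simplex R n z -> stochastic T -> 0 <= (z *m T) 0 x.
Proof.
move=> [z0 _] [T0 _]; rewrite mxE; apply: sumr_ge0 => j _; exact: mulr_ge0.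
Qed.

Lemma zT_sum (R : realType) n (T : 'M[R]_n) (z : 'rV[R]_n) :
  simplex R n z -> stochastic T -> \sum_x (z *m T) 0 x = 1.
Proof.
move=> [_ z1] [_ T1].
under eq_bigr do rewrite mxE.
rewrite exchange_big /= -[RHS]z1; apply: eq_bigr => j _.
by rewrite -mulr_sumr T1 mulr1.
Qed.

Lemma alphaE (R : realType) n m (O : finType) (T : 'M[R]_n) (M : O -> 'M[R]_(n, m)) i y z :
  alpha T M i y z = \sum_x (z *m T) 0 x * M i x y.
Proof. by rewrite /alpha mxE. Qed.

Lemma alpha_ge0 (R : realType) n m (O : finType) (T : 'M[R]_n) (M : O -> 'M[R]_(n, m)) i y z :
  simplex R n z -> stochastic T -> stochastic (M i) -> 0 <= alpha T M i y z.
Proof.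
move=> Sz sT [M0 _]; rewrite alphaE; apply: sumr_ge0 => x _.
apply: mulr_ge0 => //; exact: zT_ge0.
Qed.

Lemma alpha_sum (R : realType) n m (O : finType) (T : 'M[R]_n) (M : O -> 'M[R]_(n, m)) i z :
  simplex R n z -> stochastic T -> stochastic (M i) -> \sum_y alpha T M i y z = 1.
Proof.
move=> Sz sT [_ M1]; under eq_bigr do rewrite alphaE.
rewrite exchange_big /= -[RHS](@zT_sum _ _ T z Sz sT); apply: eq_bigr => x _.
by rewrite -mulr_sumr M1 mulr1.
Qed.

Lemma zT_lb (R : realType) n (T : 'M[R]_n) (z : 'rV[R]_n) (c : R) x :
  (forall j x, c <= T j x) -> simplex R n z -> c <= (z *m T) 0 x.
Proof.
move=> cT [z0 z1]; rewrite mxE.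
apply: (@le_trans _ _ (\sum_j z 0 j * c)); first by rewrite -mulr_suml z1 mul1r.
apply: ler_sum => j _; exact: ler_wpM2l.
Qed.

Lemma alpha_anch (R : realType) n m (O : finType) (T : 'M[R]_n) (M : O -> 'M[R]_(n, m)) i xi yi z :
  (forall x, x != xi -> M i x yi = 0) ->
  alpha T M i yi z = (z *m T) 0 xi * M i xi yi.
Proof.
move=> Mz; rewrite alphaE (bigD1 xi) //= big1 ?addr0 // => x /Mz ->; exact: mulr0.
Qed.

Lemma rmap_anch (R : realType) n m (O : finType) (T : 'M[R]_n) (M : O -> 'M[R]_(n, m)) i xi yi z :
  (forall x, x != xi -> M i x yi = 0) -> 0 < alpha T M i yi z ->
  rmap T M i yi z = pt_mass R xi.
Proof.
move=> Mz apos; have aE := @alpha_anch _ _ _ _ T M i xi yi z Mz.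
have ne : (z *m T) 0 xi * M i xi yi != 0 by rewrite -aE gt_eqF.
move: ne; rewrite mxE => ne.
apply/rowP => x; rewrite /rmap /pt_mass aE !mxE eqxx /=.
have [->|xn] := eqVneq x xi.
  by rewrite [X in X / _]mulrC divff.
by rewrite Mz // !mul0r.
Qed.

Lemma in_bigsetU (I : eqType) (U : Type) (s : seq I) (F : I -> set U) x :
  (\big[setU/set0]_(i <- s) F i) x <-> exists2 i, i \in s & F i x.
Proof.
elim: s => [|h s IH]; first by rewrite big_nil; split => // -[].
rewrite big_cons; split.
  case=> [Fx|/IH [j js Fj]]; first by exists h => //; rewrite mem_head.
  by exists j => //; rewrite in_cons js orbT.
move=> [j]; rewrite in_cons => /orP [/eqP -> Fx|js Fx]; first by left.
by right; apply/IH; exists j.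
Qed.

Lemma mu_bigsetU d (U : measurableType d) (R : realType) (mu : {measure set U -> \bar R})
  (I : eqType) (s : seq I) (F : I -> set U) :
  uniq s -> (forall i, measurable (F i)) ->
  (forall i j, i != j -> F i `&` F j = set0) ->
  mu (\big[setU/set0]_(i <- s) F i) = (\sum_(i <- s) mu (F i))%E.
Proof.
elim: s => [|h s IH] /=; first by rewrite !big_nil measure0.
move=> /andP [hs us] mF dF; rewrite !big_cons measureU //.
- by congr (_ + _)%E; apply: IH.
- exact: bigsetU_measurable.
- apply/seteqP; split => // x [Fhx /in_bigsetU [j js Fjx]].
  have hj : h != j by apply: contraNneq hs => ->.
  have : (F h `&` F j) x by [].
  by rewrite dF.
Qed.

Unset Implicit Arguments.

Theorem proposition2p21 (R : realType) (n m : nat) (O : finType)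
  (T : 'M[R]_n) (M : O -> 'M[R]_(n, m)) (g : 'rV[R]_n -> O) :
  stochastic T -> (forall i, stochastic (M i)) ->
  positive_mx T -> anchored T M ->
  (forall i : O, measurable (simplex R n `&` g @^-1` [set i]
                              : set (Borel_rV R n))) ->
  exists lambda : R, 0 < lambda < 1 /\
    forall Zs : nat -> probability (Borel_rV R n) R,
      F_trajectory T M g Zs ->
      forall t : nat, (Zs t (Rcomp T M) <= (lambda ^+ t)%:E)%E.
Proof.
move=> sT sM pT [erg anch] mA.
have anch' : forall i, exists p : 'I_n * 'I_m,
    0 < M i p.1 p.2 /\ forall x, x != p.1 -> M i x p.2 = 0.
  by move=> i; have [xi [yi H]] := anch i; exists (xi, yi).
have [f Hf] := choice anch'.
have le1 : forall (p q : nat) (A : 'M[R]_(p, q)), stochastic A -> forall i j, A i j <= 1.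
  move=> p q A [A0 A1] i j; rewrite -(A1 i) (bigD1 j) //= lerDl.
  by apply: sumr_ge0 => k _; exact: A0.
pose cT := \prod_(p : 'I_n * 'I_n) T p.1 p.2.
have cT01 : forall p : 'I_n * 'I_n, 0 <= T p.1 p.2 <= 1.
  by move=> p; rewrite ltW ?pT ?le1.
have cT_le : forall j x, cT <= T j x.
  move=> j x; rewrite /cT (bigD1 (j, x)) //=; apply: ler_piMr; first exact: ltW.
  by apply: prodr_ile1 => p _.
have cT_gt0 : 0 < cT by apply: prodr_gt0 => p _; exact: pT.
have cT_le1 : cT <= 1 by apply: prodr_ile1 => p _.
pose cM := \prod_(i : O) M i (f i).1 (f i).2.
have cM01 : forall i, 0 <= M i (f i).1 (f i).2 <= 1.
  by move=> i; rewrite ltW ?(Hf i).1 ?le1.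
have cM_le : forall i, cM <= M i (f i).1 (f i).2.
  move=> i; rewrite /cM (bigD1 i) //=; apply: ler_piMr; first exact: ltW (Hf i).1.
  by apply: prodr_ile1 => j _.
have cM_gt0 : 0 < cM by apply: prodr_gt0 => i _; exact: (Hf i).1.
have cM_le1 : cM <= 1 by apply: prodr_ile1 => i _.
pose c := cT * cM.
have c_gt0 : 0 < c by exact: mulr_gt0.
have c_le1 : c <= 1 by apply: mulr_ile1 => //; exact: ltW.
have cE : c = cT * cM by []. clearbody c.
exists (1 - c / 2); split; first by apply/andP; split; lra.
move=> Zs [Z0 Zstep].
pose A i := (simplex R n `&` g @^-1` [set i] : set (Borel_rV R n)).
have mS : measurable (simplex R n : set (Borel_rV R n)).
  have -> : simplex R n = \big[setU/set0]_(i <- index_enum O) A i.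
    apply/seteqP; split => [z Sz|z /in_bigsetU [i _ []] //].
    by apply/in_bigsetU; exists (g z); rewrite ?mem_index_enum.
  by apply: bigsetU_measurable => i _; exact: mA.
have mRc : measurable (Rcomp T M : set (Borel_rV R n)).
  by apply: measurableD => //; exact: orbit_meas.
have r0 : forall i y z, simplex R n z -> 0 < alpha T M i y z ->
    (orbitR T M z \/ y = (f i).2) -> \1_(Rcomp T M) (rmap T M i y z) = 0 :> R.
  move=> i y z Sz apos H; rewrite indicE memNset // => -[_]; apply.
  case: H => [Oz|yE]; first exact: orbitR_step.
  rewrite yE in apos *.
  rewrite (@rmap_anch _ _ _ _ T M i (f i).1 (f i).2 z (Hf i).2) //.
  exact: orbitR_base.
have H1 : forall i y z, A i z ->
   ((alpha T M i y z)%:E * (\1_(Rcomp T M) (rmap T M i y z))%:E <=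
    (alpha T M i y z * \1_(Rcomp T M) z * (y != (f i).2)%:R)%:E)%E.
  move=> i y z [Sz _]; have a0 := @alpha_ge0 _ _ _ _ T M i y z Sz sT (sM i).
  have rhs0 : (0 <= (alpha T M i y z * \1_(Rcomp T M) z * (y != (f i).2)%:R)%:E)%E.
    by rewrite lee_fin; apply: mulr_ge0 => //; apply: mulr_ge0.
  move: a0; rewrite le_eqVlt => /orP [/eqP <-|apos]; first by rewrite mul0e.
  have [Oz|nOz] := pselect (orbitR T M z).
    by rewrite (r0 i y z Sz apos (or_introl Oz)) mule0.
  have [yE|yn] := eqVneq y (f i).2.
    by rewrite (r0 i y z Sz apos (or_intror yE)) mule0 /= mulr0.
  rewrite /= -EFinM lee_fin mulr1.
  have -> : \1_(Rcomp T M) z = 1 :> R by rewrite indicE mem_set.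
  rewrite mulr1; apply: ler_piMr; first exact: ltW.
  by rewrite indicE; case: (_ \in _).
have H2 : forall i z, A i z ->
   (\sum_(y < m) (alpha T M i y z * \1_(Rcomp T M) z * (y != (f i).2)%:R)%:E <=
    ((1 - c) * \1_(Rcomp T M) z)%:E)%E.
  move=> i z [Sz _]; rewrite sumEFin lee_fin.
  have I0 : 0 <= \1_(Rcomp T M) z :> R by rewrite indicE; case: (_ \in _).
  rewrite (bigD1 (f i).2) //= eqxx mulr0 add0r.
  under eq_bigr => y /negbTE -> do rewrite mulr1 mulrC.
  rewrite -mulr_sumr mulrC ler_wpM2r //.
  have := @alpha_sum _ _ _ _ T M i z Sz sT (sM i); rewrite (bigD1 (f i).2) //= => sE.
  have -> : \sum_(y < m | y != (f i).2) alpha T M i y z = 1 - alpha T M i (f i).2 z.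
    by rewrite -sE addrC addrK.
  rewrite lerD2l lerN2 (@alpha_anch _ _ _ _ T M i (f i).1 (f i).2 z (Hf i).2).
  rewrite cE; apply: ler_pM; [exact: ltW | exact: ltW | exact: zT_lb | exact: cM_le].
have mh : forall i y, measurable_fun (A i)
    (fun z => (alpha T M i y z * \1_(Rcomp T M) z * (y != (f i).2)%:R)%:E).
  move=> i y; apply/measurable_EFinP; apply: measurable_funM => //.
  apply: measurable_funM => //.
  exact: measurable_funS (alpha_meas T M i y).
elim => [|t IH]; first by rewrite expr0; exact: probability_le1.
rewrite Zstep //.
apply: (@le_trans _ _ (\sum_(i : O) \sum_(y < m) \int[Zs t]_(z in A i)
    (alpha T M i y z * \1_(Rcomp T M) z * (y != (f i).2)%:R)%:E)%E).
  apply: lee_sum => i _; apply: lee_sum => y _; apply: le_int_nm; last exact: H1.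
  move=> z [Sz _]; apply: mule_ge0; rewrite lee_fin; first exact: alpha_ge0.
  by rewrite indicE; case: (_ \in _).
apply: (@le_trans _ _ (\sum_(i : O) \int[Zs t]_(z in A i)
    ((1 - c)%:E * (\1_(Rcomp T M) z)%:E))%E).
  apply: lee_sum => i _; have mAi : measurable (A i) by exact: mA.
  rewrite -ge0_integral_sum //; last first.
    move=> y z [Sz _]; rewrite lee_fin; apply: mulr_ge0; last by case: (_ != _).
    apply: mulr_ge0; first exact: alpha_ge0.
    by rewrite indicE; case: (_ \in _).
  apply: le_int_nm.
    move=> z [Sz _]; apply: sume_ge0 => y _; rewrite lee_fin.
    apply: mulr_ge0; last by case: (_ != _).
    apply: mulr_ge0; first exact: alpha_ge0.
    by rewrite indicE; case: (_ \in _).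
  by move=> z Az; rewrite -EFinM; exact: H2.
have c0 : 0 <= 1 - c by lra.
rewrite (eq_bigr (fun i => (1 - c)%:E * Zs t (Rcomp T M `&` A i)))%E; last first.
  move=> i _; have mAi : measurable (A i) by exact: mA.
  rewrite ge0_integralZl_EFin //; first by rewrite integral_indic.
  by apply/measurable_EFinP; exact: measurable_indic.
rewrite -ge0_sume_distrr; last by move=> i _; exact: measure_ge0.
rewrite exprS EFinM; apply: lee_pmul => //.
- by apply: sume_ge0 => i _; exact: measure_ge0.
- by rewrite lee_fin; lra.
apply: le_trans IH.
rewrite -mu_bigsetU //.
- apply: le_measure; rewrite ?inE //.
  + by apply: bigsetU_measurable => i _; apply: measurableI => //; exact: mA.
  + by move=> z /in_bigsetU [i _ []].
- exact: index_enum_uniq.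
- by move=> i; apply: measurableI => //; exact: mA.
- move=> i j ij; apply/seteqP; split => // z [[_ [_ gi]] [_ [_ gj]]].
  by move: ij; rewrite -gi -gj eqxx.
Qed.
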